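(* Let $a,b>0$, $\chi_1,\chi_2\ge0$, $\lambda_1,\lambda_2,\mu_1,\mu_2>0$ with $b+\chi_2\mu_2>\chi_1\mu_1+M$. Let $0<\mu<\min\{1,\sqrt{\lambda_1/a},\sqrt{\lambda_2/a}\}$, $\tilde\mu\in(\mu,\min\{1,2\mu,\sqrt{\lambda_1/a},\sqrt{\lambda_2/a}\})$, $d>1$, and $u\in\mathcal E_\mu$. Then for every $x\in\mathbb R$, writing $\Phi=(\chi_2\lambda_2V_2-\chi_1\lambda_1V_1)(x;u)$, $\sigma=\chi_2\mu_2\lambda_2-\chi_1\mu_1\lambda_1$, $\varphi=\varphi_\mu(x)$, $$\Phi\le\min\Big\{(\sigma)_+\min\{\tfrac{C_0}{\lambda_2},\tfrac{\varphi}{\lambda_2-a\mu^2}\}+\chi_1\mu_1\lambda_1\min\{\tfrac{C_0(\lambda_1-\lambda_2)_+}{\lambda_1\lambda_2},\tfrac{\varphi(\lambda_1-\lambda_2)_+}{(\lambda_1-a\mu^2)(\lambda_2-a\mu^2)}\},\ (\sigma)_+\min\{\tfrac{C_0}{\lambda_1},\tfrac{\varphi}{\lambda_1-a\mu^2}\}+\chi_2\mu_2\lambda_2\min\{\tfrac{C_0(\lambda_1-\lambda_2)_+}{\lambda_1\lambda_2},\tfrac{\varphi(\lambda_1-\lambda_2)_+}{(\lambda_1-a\mu^2)(\lambda_2-a\mu^2)}\}\Big\}$$ and $$\Phi\ge\max\Big\{-(\sigma)_-\min\{\tfrac{C_0}{\lambda_2},\tfrac{\varphi}{\lambda_2-a\mu^2}\}-\chi_1\mu_1\lambda_1\min\{\tfrac{C_0(\lambda_1-\lambda_2)_-}{\lambda_1\lambda_2},\tfrac{\varphi(\lambda_1-\lambda_2)_-}{(\lambda_1-a\mu^2)(\lambda_2-a\mu^2)}\},\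 -(\sigma)_-\min\{\tfrac{C_0}{\lambda_1},\tfrac{\varphi}{\lambda_1-a\mu^2}\}-\chi_2\mu_2\lambda_2\min\{\tfrac{C_0(\lambda_1-\lambda_2)_-}{\lambda_1\lambda_2},\tfrac{\varphi(\lambda_1-\lambda_2)_-}{(\lambda_1-a\mu^2)(\lambda_2-a\mu^2)}\}\Big\}.$$
   Context: $(r)_+=\max\{r,0\}$, $(r)_-=\max\{-r,0\}$. $M=\min\{\frac{(\chi_2\mu_2\lambda_2-\chi_1\mu_1\lambda_1)_++\chi_1\mu_1(\lambda_1-\lambda_2)_+}{\lambda_2},\frac{\chi_2\mu_2(\lambda_1-\lambda_2)_++(\chi_2\mu_2\lambda_2-\chi_1\mu_1\lambda_1)_+}{\lambda_1}\}$, $C_0=\frac{a}{b+\chi_2\mu_2-\chi_1\mu_1-M}$, $\varphi_\mu(x)=e^{-\sqrt a\mu x}$, $U^+_\mu=\min\{C_0,\varphi_\mu\}$, $U^-_\mu=\max\{0,\varphi_\mu-d\varphi_{\tilde\mu}\}$, $\mathcal E_\mu=\{u\in C^b_{\rm unif}(\mathbb R): U^-_\mu\le u\le U^+_\mu\}$ where $C^b_{\rm unif}(\mathbb R)$ is the space of bounded uniformly continuous functions. For $i=1,2$, $V_i(x;u)=\mu_i\int_0^\infty\int_{\mathbb R}\frac{e^{-\lambda_i s}}{\sqrt{4\pi s}}e^{-\frac{|x-z|^2}{4s}}u(z)\,dz\,ds$. *)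

(* Defs.v *)
From HB Require Import structures.
From mathcomp Require Import all_boot all_order all_algebra.
From mathcomp Require Import all_classical all_reals all_analysis.
Set Implicit Arguments. Unset Strict Implicit. Unset Printing Implicit Defensive.
Import Order.TTheory GRing.Theory Num.Theory.
Import numFieldNormedType.Exports.
Local Open Scope classical_set_scope.
Local Open Scope ring_scope.

Section Defs.
Variable R : realType.

Definition ppart (r : R) : R := Num.max r 0.
Definition npart (r : R) : R := Num.max (- r) 0.

Definition Mconst (chi1 chi2 mu1 mu2 l1 l2 : R) : R :=
  Num.min
    ((ppart (chi2 * mu2 * l2 - chi1 * mu1 * l1) + chi1 * mu1 * ppart (l1 - l2)) / l2)
    ((chi2 * mu2 * ppart (l1 - l2) + ppart (chi2 * mu2 * l2 - chi1 * mu1 * l1)) / l1).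

Definition C0 (a b chi1 chi2 mu1 mu2 l1 l2 : R) : R :=
  a / (b + chi2 * mu2 - chi1 * mu1 - Mconst chi1 chi2 mu1 mu2 l1 l2).

Definition varphi (a mu x : R) : R := expR (- (Num.sqrt a * mu * x)).

Definition Uplus (a b chi1 chi2 mu1 mu2 l1 l2 mu : R) (x : R) : R :=
  Num.min (C0 a b chi1 chi2 mu1 mu2 l1 l2) (varphi a mu x).

Definition Uminus (a mu mut d : R) (x : R) : R :=
  Num.max 0 (varphi a mu x - d * varphi a mut x).

Definition bdd_unif_cont (u : R -> R) : Prop :=
  (exists B : R, forall x, `|u x| <= B) /\
  (forall e : R, 0 < e -> exists2 del : R, 0 < del &
      forall x y : R, `|x - y| < del -> `|u x - u y| < e).

Definition in_E (a b chi1 chi2 mu1 mu2 l1 l2 mu mut d : R) (u : R -> R) : Prop :=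
  bdd_unif_cont u /\
  forall x, Uminus a mu mut d x <= u x /\ u x <= Uplus a b chi1 chi2 mu1 mu2 l1 l2 mu x.

Definition kern (l x s z : R) : R :=
  expR (- (l * s)) / Num.sqrt (4 * pi * s) * expR (- ((x - z) ^+ 2 / (4 * s))).

Definition Vop (l mui : R) (u : R -> R) (x : R) : R :=
  mui * fine (\int[lebesgue_measure]_(s in `]0%R, +oo[)
                 (\int[lebesgue_measure]_(z in [set: R]) (kern l x s z * u z)%:E))%E.

End Defs.

(* Main.v *)
Require Import Defs.
From HB Require Import structures.
From mathcomp Require Import all_boot all_order all_algebra.
From mathcomp Require Import all_classical all_reals all_analysis.
From mathcomp Require Import measurable_realfun.
From mathcomp Require Import ring lra.
Import Order.TTheory GRing.Theory Num.Theory.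
Import numFieldNormedType.Exports.
Local Open Scope ring_scope.
Local Open Scope classical_set_scope.
Set Implicit Arguments. Unset Strict Implicit.
Lemma inv_mfun (R : realType) : measurable_fun [set: R] (@GRing.inv R).
Proof.
have -> : [set: R] = [set 0] `|` ~` [set 0] by rewrite setUv.
apply/measurable_funU => //; first exact: measurableC.
split; first exact: measurable_fun_set1.
apply: open_continuous_measurable_fun.
  by apply: closed_openC; apply: accessible_closed_set1; exact: hausdorff_accessible (@Rhausdorff R).
move=> x /set_mem xne0; apply: inv_continuous; exact/eqP.
Qed.

Lemma sqrt_mfun (R : realType) : measurable_fun [set: R] (@Num.sqrt R).
Proof. apply: continuous_measurable_fun. exact: sqrt_continuous. Qed.

Lemma kern_mfun (R : realType) (l x : R) (u : R -> R) :
  measurable_fun [set: R] u ->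
  measurable_fun [set: R * R] (fun p : R * R => (kern l x p.1 p.2 * u p.2)%:E).
Proof.
move=> mu; apply/measurable_EFinP.
apply: measurable_funM; last exact: measurableT_comp mu measurable_snd.
rewrite /kern.
apply: measurable_funM; [apply: measurable_funM|].
- apply: measurableT_comp; first exact: measurable_expR.
  by apply: measurable_funN; apply: measurable_funM.
- apply: measurableT_comp; first exact: inv_mfun.
  apply: measurableT_comp; first exact: sqrt_mfun.
  by apply: measurable_funM.
- apply: measurableT_comp; first exact: measurable_expR.
  apply: measurable_funN; apply: measurable_funM.
    by apply: measurable_funX; apply: measurable_funB.
  apply: measurableT_comp; first exact: inv_mfun.
  by apply: measurable_funM.
Qed.

Lemma kern_ge0 (R : realType) (l x s z : R) : 0 <= kern l x s z.
Proof. by rewrite /kern !mulr_ge0 ?expR_ge0 ?invr_ge0 ?sqrtr_ge0. Qed.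

Lemma H_mfun (R : realType) (l x : R) (u : R -> R) :
  measurable_fun [set: R] u -> (forall z, 0 <= u z) ->
  measurable_fun [set: R] (fun s => (\int[lebesgue_measure]_(z in [set: R]) (kern l x s z * u z)%:E)%E).
Proof.
move=> mu u0.
have f0 : forall p : R * R, (0 <= (kern l x p.1 p.2 * u p.2)%:E)%E.
  by move=> p; rewrite lee_fin mulr_ge0 ?kern_ge0.
have := measurable_fun_fubini_tonelli_F (m2:=lebesgue_measure) _ (@kern_mfun R l x u mu) f0.
rewrite /fubini_F /=. exact.
Qed.

Lemma uc_cont (R : realType) (u : R -> R) :
  (forall e : R, 0 < e -> exists2 del : R, 0 < del &
      forall x y : R, `|x - y| < del -> `|u x - u y| < e) -> continuous u.
Proof.
move=> H x; apply/cvgrPdist_lt => e e0.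
have [d d0 Hd] := H e e0.
apply/nbhs_ballP; exists d => // y; rewrite /ball /=.
exact: Hd.
Qed.
Lemma kern0_pdf (R : realType) (x s z m : R) : 0 < s ->
  kern 0 x s z * expR (- (m * z)) =
  (expR (- (m * x)) * expR (m ^+ 2 * s)) * normal_pdf (x - 2 * m * s) (Num.sqrt (2 * s)) z.
Proof.
move=> s0.
have s2 : Num.sqrt (2 * s) ^+ 2 = 2 * s by rewrite sqr_sqrtr // mulr_ge0 // ltW.
rewrite /normal_pdf ifF; last first.
  by apply/negbTE; rewrite gt_eqF // sqrtr_gt0 mulr_gt0.
rewrite /kern /normal_peak /normal_fun s2 mul0r oppr0 expR0 mul1r.
have -> : 2 * s * pi *+ 2 = 4 * pi * s.
  by rewrite -mulr_natr; ring.
rewrite -mulrA -expRD -expRD mulrCA -expRD; congr (_ * expR _).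
rewrite -mulr_natr; field.
by rewrite gt_eqF.
Qed.

Lemma gauss_int (R : realType) (x s m : R) : 0 < s ->
  (\int[lebesgue_measure]_(z in [set: R]) (kern 0 x s z * expR (- (m * z)))%:E)%E
  = (expR (- (m * x)) * expR (m ^+ 2 * s))%:E.
Proof.
move=> s0.
under eq_integral do rewrite kern0_pdf // EFinM.
rewrite integralZl //; last exact: integrable_normal_pdf.
by rewrite integral_normal_pdf mule1.
Qed.

Lemma gauss_int1 (R : realType) (x s : R) : 0 < s ->
  (\int[lebesgue_measure]_(z in [set: R]) (kern 0 x s z)%:E)%E = 1%E.
Proof.
move=> s0; have := @gauss_int R x s 0 s0.
rewrite !mul0r oppr0 expR0 expr0n /= mul0r expR0 mulr1 => <-.
by apply: eq_integral => z _; rewrite mul0r oppr0 expR0 mulr1.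
Qed.

Lemma kernz_mfun (R : realType) (l x s : R) :
  measurable_fun [set: R] (fun z => kern l x s z).
Proof.
rewrite /kern; apply: measurable_funM => //.
apply: measurableT_comp; first exact: measurable_expR.
apply: measurable_funN; apply: measurable_funM => //.
by apply: measurable_funX; apply: measurable_funB.
Qed.

Lemma H_bound (R : realType) (x s C m : R) (u : R -> R) : 0 < s ->
  measurable_fun [set: R] u -> (forall z, 0 <= u z) -> (forall z, u z <= C) ->
  (forall z, u z <= expR (- (m * z))) ->
  let H := (\int[lebesgue_measure]_(z in [set: R]) (kern 0 x s z * u z)%:E)%E in
  (0 <= H)%E /\ (H <= C%:E)%E /\ (H <= (expR (- (m * x)) * expR (m ^+ 2 * s))%:E)%E.
Proof.
move=> s0 mu u0 uC um H.
have mf : measurable_fun [set: R] (fun z => (kern 0 x s z * u z)%:E).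
  by apply/measurable_EFinP; apply: measurable_funM => //; exact: kernz_mfun.
have f0 : forall z, [set: R] z -> (0 <= (kern 0 x s z * u z)%:E)%E.
  by move=> z _; rewrite lee_fin mulr_ge0 ?kern_ge0.
split; first by apply: integral_ge0.
split.
  apply: (@le_trans _ _ (\int[lebesgue_measure]_(z in [set: R]) (C%:E * (kern 0 x s z)%:E))%E).
    apply: ge0_le_integral => //.
      apply: emeasurable_funM => //; apply/measurable_EFinP; exact: kernz_mfun.
    by move=> z _; rewrite -EFinM lee_fin mulrC ler_wpM2r ?kern_ge0.
  rewrite ge0_integralZl //.
  - by rewrite gauss_int1 // mule1.
  - by apply/measurable_EFinP; exact: kernz_mfun.
  - by move=> z _; rewrite lee_fin kern_ge0.
  - by rewrite lee_fin (le_trans (u0 0)).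
rewrite /H -(@gauss_int R x s m s0).
apply: ge0_le_integral => //.
  apply/measurable_EFinP; apply: measurable_funM; first exact: kernz_mfun.
  apply: measurableT_comp; first exact: measurable_expR.
  by apply: measurable_funN; apply: measurable_funM.
by move=> z _; rewrite lee_fin ler_wpM2l ?kern_ge0.
Qed.
Lemma expint (R : realType) (c : R) : 0 < c ->
  (\int[lebesgue_measure]_(s in `]0%R, +oo[) (expR (- (c * s)))%:E)%E = (c^-1)%:E.
Proof.
move=> c0.
have me : measurable_fun [set: R] (fun s : R => expR (- (c * s))).
  apply: measurableT_comp; first exact: measurable_expR.
  by apply: measurable_funN; apply: measurable_funM.
rewrite integral_itv_obnd_cbnd; last first.
  by apply/measurable_EFinP; exact: measurable_funS me.
have : (\int[lebesgue_measure]_(x in `[0%R, +oo[) (c%:E * (expR (- (c * x)))%:E) = 1)%E.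
  rewrite -(integral_exponential_pdf c0) /exponential_pdf integral_mkcond.
  apply: eq_integral => y _; rewrite !patchE.
  by case: ifP => _ //; rewrite EFinM mulNr.
rewrite ge0_integralZl //; last 2 first.
- by apply/measurable_EFinP; exact: measurable_funS me.
- by rewrite lee_fin ltW.
set I := (\int[_]_(_ in _) _)%E.
have I0 : (0 <= I)%E by apply: integral_ge0 => s _; rewrite lee_fin expR_ge0.
case: I I0 => [r| |] //= I0.
  rewrite -EFinM => /eqP; rewrite eqe => /eqP h; congr EFin.
  by apply: (mulfI (lt0r_neq0 c0)); rewrite h divff // lt0r_neq0.
by rewrite gt0_muley // lte_fin.
Qed.

Lemma expintk (R : realType) (k c : R) : 0 <= k -> 0 < c ->
  (\int[lebesgue_measure]_(s in `]0%R, +oo[) (k * expR (- (c * s)))%:E)%E = (k / c)%:E.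
Proof.
move=> k0 c0.
under eq_integral do rewrite EFinM.
rewrite ge0_integralZl //; first by rewrite expint // -EFinM.
all: try by move=> s _; rewrite lee_fin expR_ge0.
apply/measurable_EFinP; apply: measurableT_comp; first exact: measurable_expR.
by apply: measurable_funN; apply: measurable_funM.
Qed.

Lemma int_lin (R : realType) (f1 f2 : R -> R) :
  measurable_fun [set: R] f1 -> measurable_fun [set: R] f2 ->
  (forall s, 0 < s -> 0 <= f1 s) -> (forall s, 0 < s -> 0 <= f2 s) ->
  (\int[lebesgue_measure]_(s in `]0%R, +oo[) (f1 s + f2 s)%:E)%E =
  (\int[lebesgue_measure]_(s in `]0%R, +oo[) (f1 s)%:E +
   \int[lebesgue_measure]_(s in `]0%R, +oo[) (f2 s)%:E)%E.
Proof.
move=> m1 m2 p1 p2.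
under eq_integral do rewrite EFinD.
apply: ge0_integralD => //.
- by move=> s; rewrite /= in_itv /= andbT => s0; rewrite lee_fin p1.
- by apply/measurable_EFinP; exact: measurable_funS m1.
- by move=> s; rewrite /= in_itv /= andbT => s0; rewrite lee_fin p2.
- by apply/measurable_EFinP; exact: measurable_funS m2.
Qed.

Lemma ext_sub (R : realType) (a b : R) (Y : \bar R) :
  (0 <= Y)%E -> a%:E = (b%:E + Y)%E -> Y = (a - b)%:E.
Proof.
case: Y => [r| |] //= _.
  by rewrite -EFinD => /eqP; rewrite eqe => /eqP ->; rewrite addrC addKr.
Qed.

Lemma int_mono (R : realType) (f1 f2 : R -> R) :
  measurable_fun [set: R] f1 -> measurable_fun [set: R] f2 ->
  (forall s, 0 < s -> 0 <= f1 s) -> (forall s, 0 < s -> f1 s <= f2 s) ->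
  (\int[lebesgue_measure]_(s in `]0%R, +oo[) (f1 s)%:E <=
   \int[lebesgue_measure]_(s in `]0%R, +oo[) (f2 s)%:E)%E.
Proof.
move=> m1 m2 p1 p12.
apply: ge0_le_integral => //.
- by move=> s; rewrite /= in_itv /= andbT => s0; rewrite lee_fin p1.
- by apply/measurable_EFinP; exact: measurable_funS m1.
- by apply/measurable_EFinP; exact: measurable_funS m2.
- by move=> s; rewrite /= in_itv /= andbT => s0; rewrite lee_fin p12.
Qed.

Definition Iint (R : realType) (p : R) (h : R -> R) : \bar R :=
  (\int[lebesgue_measure]_(s in `]0%R, +oo[) (expR (- (p * s)) * h s)%:E)%E.

Definition hhyp (R : realType) (h : R -> R) (C P q : R) : Prop :=
  measurable_fun [set: R] h /\
  forall s, 0 < s -> 0 <= h s /\ h s <= C /\ h s <= P * expR (q * s).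

Lemma mexp (R : realType) (c : R) : measurable_fun [set: R] (fun s : R => expR (- (c * s))).
Proof.
apply: measurableT_comp; first exact: measurable_expR.
by apply: measurable_funN; apply: measurable_funM.
Qed.

Lemma hhyp_CP (R : realType) (h : R -> R) (C P q : R) : hhyp h C P q -> 0 <= C /\ 0 <= P.
Proof.
move=> [_ H]; have [h0 [hC hP]] := H 1 ltr01; split; first exact: le_trans hC.
have := le_trans h0 hP; rewrite pmulr_lge0 //; exact: expR_gt0.
Qed.

Lemma Iint_fin (R : realType) (h : R -> R) (C P q p : R) :
  0 < p -> q < p -> hhyp h C P q ->
  Iint p h = (fine (Iint p h))%:E /\ 0 <= fine (Iint p h) /\
  fine (Iint p h) <= C / p /\ fine (Iint p h) <= P / (p - q).
Proof.
move=> p0 qp hh; have [C0 P0] := hhyp_CP hh; case: hh => mh H.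
have mf : measurable_fun [set: R] (fun s => expR (- (p * s)) * h s).
  by apply: measurable_funM => //; exact: mexp.
have I0 : (0 <= Iint p h)%E.
  apply: integral_ge0 => s; rewrite /= in_itv /= andbT => s0.
  by rewrite lee_fin mulr_ge0 ?expR_ge0 //; case: (H s s0).
have IC : (Iint p h <= (C / p)%:E)%E.
  rewrite -expintk // /Iint; apply: int_mono => //.
  - by apply: measurable_funM => //; exact: mexp.
  - by move=> s s0; rewrite mulr_ge0 ?expR_ge0 //; case: (H s s0).
  - move=> s s0; rewrite mulrC ler_wpM2r ?expR_ge0 //.
    by case: (H s s0) => _ [].
have IP : (Iint p h <= (P / (p - q))%:E)%E.
  rewrite -expintk ?subr_gt0 // /Iint; apply: int_mono => //.
  - by apply: measurable_funM => //; exact: mexp.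
  - by move=> s s0; rewrite mulr_ge0 ?expR_ge0 //; case: (H s s0).
  - move=> s s0.
    have -> : P * expR (- ((p - q) * s)) = expR (- (p * s)) * (P * expR (q * s)).
      by rewrite mulrCA -expRD; congr (_ * expR _); ring.
    rewrite ler_wpM2l ?expR_ge0 //.
    by case: (H s s0) => _ [].
have fI : Iint p h \is a fin_num.
  by rewrite ge0_fin_numE // (le_lt_trans IC) // ltry.
have E := fineK fI.
split; first by rewrite E.
split; first by rewrite -lee_fin E.
by split; rewrite -lee_fin E.
Qed.

Lemma Iint_diff (R : realType) (h : R -> R) (C P q p p' : R) :
  0 < p -> 0 < p' -> q < p -> q < p' -> hhyp h C P q ->
  fine (Iint p h) - fine (Iint p' h) <=
  Num.min (C * ppart (p' - p) / (p' * p)) (P * ppart (p' - p) / ((p' - q) * (p - q))).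
Proof.
move=> p0 p'0 qp qp' hh.
have [E [J0 [JC JP]]] := Iint_fin p0 qp hh.
have [E' [J0' [JC' JP']]] := Iint_fin p'0 qp' hh.
have [C0 P0] := hhyp_CP hh; case: hh => mh H.
have mf : forall c, measurable_fun [set: R] (fun s => expR (- (c * s)) * h s).
  by move=> c; apply: measurable_funM => //; exact: mexp.
have hge0 : forall s, 0 < s -> 0 <= h s by move=> s s0; case: (H s s0).
case: (leP p' p) => hpp.
  have -> : ppart (p' - p) = 0.
    by rewrite /ppart; apply/max_idPr; rewrite subr_le0.
  rewrite !mulr0 !mul0r minxx subr_le0 -lee_fin -E -E'.
  apply: int_mono => //.
  - by move=> s s0; rewrite mulr_ge0 ?expR_ge0 ?hge0.
  - move=> s s0; rewrite ler_wpM2r ?hge0 // ler_expR lerN2.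
    by rewrite ler_wpM2r // ltW.
have -> : ppart (p' - p) = p' - p.
  by rewrite /ppart; apply/max_idPl; rewrite subr_ge0 ltW.
pose w s := expR (- (p * s)) - expR (- (p' * s)).
have mw : measurable_fun [set: R] w by apply: measurable_funB; exact: mexp.
have w0 : forall s, 0 < s -> 0 <= w s.
  move=> s s0; rewrite subr_ge0 ler_expR lerN2.
  by rewrite ler_wpM2r // ltW.
have eq1 : (fine (Iint p h))%:E = ((fine (Iint p' h))%:E +
    \int[lebesgue_measure]_(s in `]0%R, +oo[) (w s * h s)%:E)%E.
  rewrite -E -E' /Iint -int_lin //.
  - by apply: eq_integral => s _; congr EFin; rewrite /w; ring.
  - by apply: measurable_funM.
  - by move=> s s0; rewrite mulr_ge0 ?expR_ge0 ?hge0.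
  - by move=> s s0; rewrite mulr_ge0 ?w0 ?hge0.
have eqC : (C / p)%:E = ((C / p')%:E +
    \int[lebesgue_measure]_(s in `]0%R, +oo[) (w s * C)%:E)%E.
  rewrite -!expintk // -int_lin //.
  - by apply: eq_integral => s _; congr EFin; rewrite /w; ring.
  - by apply: measurable_funM => //; exact: mexp.
  - by apply: measurable_funM.
  - by move=> s s0; rewrite mulr_ge0 ?expR_ge0.
  - by move=> s s0; rewrite mulr_ge0 ?w0.
have eqPP : (P / (p - q))%:E = ((P / (p' - q))%:E +
    \int[lebesgue_measure]_(s in `]0%R, +oo[) (w s * (P * expR (q * s)))%:E)%E.
  rewrite -!expintk ?subr_gt0 // -int_lin //.
  - apply: eq_integral => s _; congr EFin; rewrite /w.
    have e1 : expR (- (p * s)) * expR (q * s) = expR (- ((p - q) * s)).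
      by rewrite -expRD; congr expR; ring.
    have e2 : expR (- (p' * s)) * expR (q * s) = expR (- ((p' - q) * s)).
      by rewrite -expRD; congr expR; ring.
    rewrite [RHS](_ : _ = P * expR (- ((p' - q) * s)) +
      P * (expR (- (p * s)) * expR (q * s)) - P * (expR (- (p' * s)) * expR (q * s))); last by ring.
    by rewrite e1 e2; ring.
  - by apply: measurable_funM => //; exact: mexp.
  - apply: measurable_funM => //; apply: measurable_funM => //.
    apply: measurableT_comp; first exact: measurable_expR.
    by apply: measurable_funM.
  - by move=> s s0; rewrite mulr_ge0 ?expR_ge0.
  - by move=> s s0; rewrite !mulr_ge0 ?w0 ?expR_ge0.
have X0 : (0 <= \int[lebesgue_measure]_(s in `]0%R, +oo[) (w s * h s)%:E)%E.
  apply: integral_ge0 => s; rewrite /= in_itv /= andbT => s0.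
  by rewrite lee_fin mulr_ge0 ?w0 ?hge0.
have YC0 : (0 <= \int[lebesgue_measure]_(s in `]0%R, +oo[) (w s * C)%:E)%E.
  apply: integral_ge0 => s; rewrite /= in_itv /= andbT => s0.
  by rewrite lee_fin mulr_ge0 ?w0.
have YP0 : (0 <= \int[lebesgue_measure]_(s in `]0%R, +oo[) (w s * (P * expR (q * s)))%:E)%E.
  apply: integral_ge0 => s; rewrite /= in_itv /= andbT => s0.
  by rewrite lee_fin !mulr_ge0 ?w0 ?expR_ge0.
have XE := ext_sub X0 eq1.
have YCE := ext_sub YC0 eqC.
have YPE := ext_sub YP0 eqPP.
have XC : fine (Iint p h) - fine (Iint p' h) <= C / p - C / p'.
  rewrite -lee_fin -XE -YCE; apply: int_mono => //.
  - by apply: measurable_funM.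
  - by apply: measurable_funM.
  - by move=> s s0; rewrite mulr_ge0 ?w0 ?hge0.
  - by move=> s s0; rewrite ler_wpM2l ?w0 //; case: (H s s0) => _ [].
have XP : fine (Iint p h) - fine (Iint p' h) <= P / (p - q) - P / (p' - q).
  rewrite -lee_fin -XE -YPE; apply: int_mono => //.
  - by apply: measurable_funM.
  - apply: measurable_funM => //; apply: measurable_funM => //.
    apply: measurableT_comp; first exact: measurable_expR.
    by apply: measurable_funM.
  - by move=> s s0; rewrite mulr_ge0 ?w0 ?hge0.
  - by move=> s s0; rewrite ler_wpM2l ?w0 //; case: (H s s0) => _ [].
rewrite le_min; apply/andP; split.
  apply: (le_trans XC); rewrite le_eqVlt; apply/orP; left; apply/eqP.
  by field; rewrite !gt_eqF.
apply: (le_trans XP); rewrite le_eqVlt; apply/orP; left; apply/eqP.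
by field; rewrite !gt_eqF // subr_gt0.
Qed.
Lemma ppart_ge (R : realType) (r : R) : r <= ppart r /\ 0 <= ppart r.
Proof. by rewrite /ppart le_max lexx le_max lexx orbT. Qed.
Lemma npart_ge (R : realType) (r : R) : - r <= npart r /\ 0 <= npart r.
Proof. by rewrite /npart le_max lexx le_max lexx orbT. Qed.

Lemma final_alg (R : realType) (chi1 chi2 mu1 mu2 l1 l2 J1 J2 m1 m2 dP dN : R) :
  0 <= chi1 -> 0 <= chi2 -> 0 < mu1 -> 0 < mu2 -> 0 < l1 -> 0 < l2 ->
  0 <= J1 -> 0 <= J2 -> J1 <= m1 -> J2 <= m2 -> J2 - J1 <= dP -> J1 - J2 <= dN ->
  let sigma := chi2 * mu2 * l2 - chi1 * mu1 * l1 in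
  let Phi := chi2 * l2 * (mu2 * J2) - chi1 * l1 * (mu1 * J1) in
  Phi <= Num.min (ppart sigma * m2 + chi1 * mu1 * l1 * dP)
                 (ppart sigma * m1 + chi2 * mu2 * l2 * dP) /\
  Num.max (- (npart sigma * m2) - chi1 * mu1 * l1 * dN)
          (- (npart sigma * m1) - chi2 * mu2 * l2 * dN) <= Phi.
Proof.
move=> c1 c2 u1 u2 hl1 hl2 J10 J20 Jm1 Jm2 hdP hdN sigma Phi.
have [sp sp0] := ppart_ge sigma; have [sn sn0] := npart_ge sigma.
have k1 : 0 <= chi1 * mu1 * l1 by rewrite !mulr_ge0 // ltW.
have k2 : 0 <= chi2 * mu2 * l2 by rewrite !mulr_ge0 // ltW.
have E1 : Phi = sigma * J2 + chi1 * mu1 * l1 * (J2 - J1) by rewrite /Phi /sigma; ring.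
have E2 : Phi = sigma * J1 + chi2 * mu2 * l2 * (J2 - J1) by rewrite /Phi /sigma; ring.
have a1 : sigma * J2 <= ppart sigma * m2.
  apply: (le_trans (y := ppart sigma * J2)); first by rewrite ler_wpM2r.
  by rewrite ler_wpM2l.
have a2 : sigma * J1 <= ppart sigma * m1.
  apply: (le_trans (y := ppart sigma * J1)); first by rewrite ler_wpM2r.
  by rewrite ler_wpM2l.
have b1 : - (npart sigma * m2) <= sigma * J2.
  apply: (le_trans (y := - (npart sigma * J2))); first by rewrite lerN2 ler_wpM2l.
  by rewrite -mulNr ler_wpM2r // lerNl.
have b2 : - (npart sigma * m1) <= sigma * J1.
  apply: (le_trans (y := - (npart sigma * J1))); first by rewrite lerN2 ler_wpM2l.
  by rewrite -mulNr ler_wpM2r // lerNl.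
have d1 : chi1 * mu1 * l1 * (J2 - J1) <= chi1 * mu1 * l1 * dP by rewrite ler_wpM2l.
have d2 : chi2 * mu2 * l2 * (J2 - J1) <= chi2 * mu2 * l2 * dP by rewrite ler_wpM2l.
have e1 : - (chi1 * mu1 * l1 * dN) <= chi1 * mu1 * l1 * (J2 - J1).
  by rewrite -mulrN ler_wpM2l // lerNl opprB.
have e2 : - (chi2 * mu2 * l2 * dN) <= chi2 * mu2 * l2 * (J2 - J1).
  by rewrite -mulrN ler_wpM2l // lerNl opprB.
split.
  rewrite le_min; apply/andP; split.
    by rewrite E1; apply: lerD.
  by rewrite E2; apply: lerD.
rewrite ge_max; apply/andP; split.
  by rewrite E1; apply: lerD.
by rewrite E2; apply: lerD.
Qed.

Lemma kern_split (R : realType) (l x s z w : R) :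
  kern l x s z * w = expR (- (l * s)) * (kern 0 x s z * w).
Proof. by rewrite /kern mul0r oppr0 expR0 mul1r !mulrA. Qed.

Unset Implicit Arguments.

Theorem lemma2p2 (R : realType) (a b chi1 chi2 l1 l2 mu1 mu2 mu mut d : R)
  (u : R -> R)
  (ha : 0 < a) (hb : 0 < b) (hchi1 : 0 <= chi1) (hchi2 : 0 <= chi2)
  (hl1 : 0 < l1) (hl2 : 0 < l2) (hmu1 : 0 < mu1) (hmu2 : 0 < mu2)
  (hM : chi1 * mu1 + Mconst chi1 chi2 mu1 mu2 l1 l2 < b + chi2 * mu2)
  (hmu0 : 0 < mu) (hmu_1 : mu < 1)
  (hmu_l1 : mu < Num.sqrt (l1 / a)) (hmu_l2 : mu < Num.sqrt (l2 / a))
  (hmut0 : mu < mut) (hmut_1 : mut < 1) (hmut_2 : mut < 2 * mu)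
  (hmut_l1 : mut < Num.sqrt (l1 / a)) (hmut_l2 : mut < Num.sqrt (l2 / a))
  (hd : 1 < d)
  (hu : in_E a b chi1 chi2 mu1 mu2 l1 l2 mu mut d u) :
  forall x : R,
    let Phi := chi2 * l2 * Vop l2 mu2 u x - chi1 * l1 * Vop l1 mu1 u x in
    let sigma := chi2 * mu2 * l2 - chi1 * mu1 * l1 in
    let phi := varphi a mu x in
    let c0 := C0 a b chi1 chi2 mu1 mu2 l1 l2 in
    Phi <= Num.min
      (ppart sigma * Num.min (c0 / l2) (phi / (l2 - a * mu ^+ 2))
       + chi1 * mu1 * l1 * Num.min (c0 * ppart (l1 - l2) / (l1 * l2))
           (phi * ppart (l1 - l2) / ((l1 - a * mu ^+ 2) * (l2 - a * mu ^+ 2))))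
      (ppart sigma * Num.min (c0 / l1) (phi / (l1 - a * mu ^+ 2))
       + chi2 * mu2 * l2 * Num.min (c0 * ppart (l1 - l2) / (l1 * l2))
           (phi * ppart (l1 - l2) / ((l1 - a * mu ^+ 2) * (l2 - a * mu ^+ 2))))
    /\
    Num.max
      (- (npart sigma * Num.min (c0 / l2) (phi / (l2 - a * mu ^+ 2)))
       - chi1 * mu1 * l1 * Num.min (c0 * npart (l1 - l2) / (l1 * l2))
           (phi * npart (l1 - l2) / ((l1 - a * mu ^+ 2) * (l2 - a * mu ^+ 2))))
      (- (npart sigma * Num.min (c0 / l1) (phi / (l1 - a * mu ^+ 2)))
       - chi2 * mu2 * l2 * Num.min (c0 * npart (l1 - l2) / (l1 * l2))
           (phi * npart (l1 - l2) / ((l1 - a * mu ^+ 2) * (l2 - a * mu ^+ 2))))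
    <= Phi.
Proof.
move=> x Phi sigma phi c0.
case: hu => [[_ huc] hUE].
have mu_ : measurable_fun [set: R] u.
  by apply: continuous_measurable_fun; exact: uc_cont huc.
have u0 : forall z, 0 <= u z.
  move=> z; have [h1 _] := hUE z; apply: le_trans h1.
  by rewrite /Uminus le_max lexx.
have uC : forall z, u z <= c0.
  by move=> z; have [_] := hUE z; rewrite /Uplus le_min => /andP[].
have uphi : forall z, u z <= expR (- ((Num.sqrt a * mu) * z)).
  by move=> z; have [_] := hUE z; rewrite /Uplus le_min => /andP[].
pose H0 s := (\int[lebesgue_measure]_(z in [set: R]) (kern 0 x s z * u z)%:E)%E.
pose h s := fine (H0 s).
have H0E : forall s, 0 < s -> H0 s = (h s)%:E /\ 0 <= h s /\ h s <= c0 /\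
    h s <= phi * expR (a * mu ^+ 2 * s).
  move=> s s0.
  have [A [B Cc]] := @H_bound R x s c0 (Num.sqrt a * mu) u s0 mu_ u0 uC uphi.
  have fH : H0 s \is a fin_num by rewrite ge0_fin_numE // (le_lt_trans B) // ltry.
  have E := fineK fH.
  have sq : (Num.sqrt a * mu) ^+ 2 = a * mu ^+ 2 by rewrite exprMn sqr_sqrtr // ltW.
  rewrite sq in Cc.
  split; first by rewrite /h E.
  split; first by rewrite -lee_fin /h E.
  by split; rewrite -lee_fin /h E.
have hh : hhyp h c0 phi (a * mu ^+ 2).
  split.
    apply: measurableT_comp; first exact: fine_measurable.
    exact: (@H_mfun R 0 x u mu_ u0).
  by move=> s s0; have [_ H'] := H0E s s0.
have Vl : forall l mui, Vop l mui u x = mui * fine (Iint l h).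
  move=> l mui; rewrite /Vop /Iint; congr (_ * fine _).
  apply: eq_integral => s; rewrite inE /= in_itv /= andbT => s0.
  under eq_integral do rewrite kern_split EFinM.
  rewrite ge0_integralZl //.
  - by rewrite EFinM; congr (_ * _)%E; exact: (H0E s s0).1.
  - apply/measurable_EFinP; apply: measurable_funM => //; exact: kernz_mfun.
  - by move=> z _; rewrite lee_fin mulr_ge0 ?kern_ge0.
have qlt : forall l, mu < Num.sqrt (l / a) -> 0 < l -> a * mu ^+ 2 < l.
  move=> l hl l0.
  have : mu * mu < Num.sqrt (l / a) * Num.sqrt (l / a).
    by apply: ltr_pM => //; exact: ltW.
  rewrite -!expr2 sqr_sqrtr; last by rewrite divr_ge0 // ltW.
  move=> hh2; rewrite -(ltr_pM2l ha) in hh2.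
  by rewrite (lt_le_trans hh2) // mulrC divfK // gt_eqF.
have q1 := qlt l1 hmu_l1 hl1.
have q2 := qlt l2 hmu_l2 hl2.
have [_ [J10 [J1C J1P]]] := Iint_fin hl1 q1 hh.
have [_ [J20 [J2C J2P]]] := Iint_fin hl2 q2 hh.
have dP := Iint_diff hl2 hl1 q2 q1 hh.
have dN := Iint_diff hl1 hl2 q1 q2 hh.
have np : npart (l1 - l2) = ppart (l2 - l1) by rewrite /npart /ppart opprB.
rewrite [l2 * l1]mulrC [(l2 - a * mu ^+ 2) * _]mulrC -np in dN.
have Jm1 : fine (Iint l1 h) <= Num.min (c0 / l1) (phi / (l1 - a * mu ^+ 2)).
  by rewrite le_min J1C J1P.
have Jm2 : fine (Iint l2 h) <= Num.min (c0 / l2) (phi / (l2 - a * mu ^+ 2)).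
  by rewrite le_min J2C J2P.
have := final_alg hchi1 hchi2 hmu1 hmu2 hl1 hl2 J10 J20 Jm1 Jm2 dP dN.
by rewrite /Phi !Vl.
Qed.
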